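(* There exists no lifting, with respect to the functor $\operatorname{Con}_c$, of the diagram $\mathcal D_{ac}$ by a diagram of lattices and lattice homomorphisms in which the three lattices corresponding to $S_0,S_1,S_2$ have almost permutable congruences.
   Context: Posets are viewed as categories; a $P$-diagram is a functor from $P$. $\operatorname{Con}_c$ sends a lattice to its $\{\vee,0\}$-semilattice of compact congruences and a lattice homomorphism $f\colon K\to L$ to the map sending a compact congruence $\alpha$ of $K$ to the congruence of $L$ generated by $\{(f(x),f(y)):(x,y)\in\alpha\}$. A $P$-diagram $\mathcal L$ of lattices lifts a $P$-diagram $\mathcal S$ of semilattices if $\operatorname{Con}_c\circ\mathcal L\cong\mathcal S$ (natural isomorphism). A lattice has almost permutable congruences if $\alpha\vee\beta=\alpha\beta\cup\beta\alpha$ for all congruences $\alpha,\beta$, where $\alpha\beta=\{(x,y):\exists z,(x,z)\in\alpha,(z,y)\in\beta\}$. The diagram $\mathcal D_{ac}$ is indexed by $\mathcal P(\{0,1,2\})$ under inclusion. Let $U=\mathcal P(\{0,\dots,7\})$ with union and $\varnothing$. Put $\xi_0=\{0,4,7\},\xi_1=\{3,5,6\},\xi_2=\{2,5,6\},\xi_3=\{1,4,7\}$; $\eta_0=\{0,4,5,7\},\eta_1=\{1,4,6,7\},\eta_2=\{2,5,6,7\},\eta_3=\{3,4,5,6\}$; $\zeta_0=\{0,4,6\},\zeta_1=\{1,5,7\},\zeta_2=\{3,5,7\},\zeta_3=\{2,4,6\}$; $\alpha_0=\{0,1,4,5,6,7\},\beta_0=\{2,3,4,5,6,7\}$; $\alpha_1=\{0,3,4,5,6,7\},\beta_1=\{1,2,4,5,6,7\}$;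 $\alpha_2=\{0,2,4,5,6,7\},\beta_2=\{1,3,4,5,6,7\}$. Let $T_0$ (resp. $T_1$, $T_2$) be the $\{\vee,0\}$-subsemilattice of $U$ generated by the $\xi_j$ (resp. $\eta_j$, $\zeta_j$), $j<4$; $S_i$ ($i<3$) the one generated by $\{\alpha_i,\beta_i\}$; $\mathbf 2=\{\varnothing,\{0,\dots,7\}\}$. Then $S_i\subseteq T_j$ for $i\neq j$, and $\mathcal D_{ac}$ assigns $\mathbf 2$ to $\varnothing$, $S_i$ to $\{i\}$, $T_j$ to $\{0,1,2\}\setminus\{j\}$, $U$ to $\{0,1,2\}$, with inclusion maps. *)

(* Defs.v *)
(* lattices are an
   explicit record so that arbitrary (possibly infinite) lattices on any
   Type are allowed. *)
From Stdlib Require List.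
From mathcomp Require Import all_boot.
Set Implicit Arguments. Unset Strict Implicit. Unset Printing Implicit Defensive.

Record lattice := Lattice {
  carrier :> Type;
  meet : carrier -> carrier -> carrier;
  join : carrier -> carrier -> carrier;
  meetC : forall x y, meet x y = meet y x;
  joinC : forall x y, join x y = join y x;
  meetA : forall x y z, meet x (meet y z) = meet (meet x y) z;
  joinA : forall x y z, join x (join y z) = join (join x y) z;
  meetKj : forall x y, meet x (join x y) = x;
  joinKm : forall x y, join x (meet x y) = x
}.

Definition is_lattice_hom (K L : lattice) (g : K -> L) : Prop :=
  forall x y, g (meet x y) = meet (g x) (g y) /\ g (join x y) = join (g x) (g y).

Definition lrel (L : lattice) := L -> L -> Prop.

Definition subrel (L : lattice) (a b : lrel L) : Prop :=
  forall x y, a x y -> b x y.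

Definition is_congruence (L : lattice) (t : lrel L) : Prop :=
  [/\ (forall x, t x x),
      (forall x y, t x y -> t y x),
      (forall x y z, t x y -> t y z -> t x z) &
      (forall x1 y1 x2 y2, t x1 y1 -> t x2 y2 ->
          t (meet x1 x2) (meet y1 y2) /\ t (join x1 x2) (join y1 y2))].

Definition cong_gen (L : lattice) (R : lrel L) : lrel L :=
  fun x y => forall t : lrel L, is_congruence t -> subrel R t -> t x y.

Definition cong_join (L : lattice) (a b : lrel L) : lrel L :=
  cong_gen (fun x y => a x y \/ b x y).

Definition cong_zero (L : lattice) : lrel L := fun x y => x = y.

Definition is_compact_congruence (L : lattice) (t : lrel L) : Prop :=
  is_congruence t /\
  forall (I : Type) (b : I -> lrel L),
    (forall i, is_congruence (b i)) ->
    subrel t (cong_gen (fun x y => exists i, b i x y)) ->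
    exists s : list I,
      subrel t (cong_gen (fun x y => exists i, List.In i s /\ b i x y)).

Definition Conc_map (K L : lattice) (g : K -> L) (t : lrel K) : lrel L :=
  cong_gen (fun u v => exists x y, t x y /\ u = g x /\ v = g y).

Definition rcomp (L : lattice) (a b : lrel L) : lrel L :=
  fun x y => exists z, a x z /\ b z y.

Definition almost_permutable (L : lattice) : Prop :=
  forall a b : lrel L, is_congruence a -> is_congruence b ->
    forall x y, cong_join a b x y <-> (rcomp a b x y \/ rcomp b a x y).

Definition s8 (l : seq nat) : {set 'I_8} := [set i : 'I_8 | val i \in l].

Definition xi0 := s8 [:: 0; 4; 7].   Definition xi1 := s8 [:: 3; 5; 6].
Definition xi2 := s8 [:: 2; 5; 6].   Definition xi3 := s8 [:: 1; 4; 7].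
Definition eta0 := s8 [:: 0; 4; 5; 7]. Definition eta1 := s8 [:: 1; 4; 6; 7].
Definition eta2 := s8 [:: 2; 5; 6; 7]. Definition eta3 := s8 [:: 3; 4; 5; 6].
Definition zeta0 := s8 [:: 0; 4; 6]. Definition zeta1 := s8 [:: 1; 5; 7].
Definition zeta2 := s8 [:: 3; 5; 7]. Definition zeta3 := s8 [:: 2; 4; 6].
Definition alpha0 := s8 [:: 0; 1; 4; 5; 6; 7]. Definition beta0 := s8 [:: 2; 3; 4; 5; 6; 7].
Definition alpha1 := s8 [:: 0; 3; 4; 5; 6; 7]. Definition beta1 := s8 [:: 1; 2; 4; 5; 6; 7].
Definition alpha2 := s8 [:: 0; 2; 4; 5; 6; 7]. Definition beta2 := s8 [:: 1; 3; 4; 5; 6; 7].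

Definition i3 (n : nat) : 'I_3 := inord n.

(* generators of the {\/,0}-subsemilattice of U assigned to each p *)
Definition Dac_gens (p : {set 'I_3}) : seq {set 'I_8} :=
  if p == set0 then [:: setT]                                   (* 2 *)
  else if p == [set i3 0] then [:: alpha0; beta0]
  else if p == [set i3 1] then [:: alpha1; beta1]
  else if p == [set i3 2] then [:: alpha2; beta2]
  else if p == [set i3 1; i3 2] then [:: xi0; xi1; xi2; xi3]    (* T_0 *)
  else if p == [set i3 0; i3 2] then [:: eta0; eta1; eta2; eta3] (* T_1 *)
  else if p == [set i3 0; i3 1] then [:: zeta0; zeta1; zeta2; zeta3] (* T_2 *)
  else [seq [set i] | i : 'I_8].                                (* U *)

Definition Dac (p : {set 'I_3}) (X : {set 'I_8}) : Prop :=
  exists m : bitseq, X = \bigcup_(Y <- mask m (Dac_gens p)) Y.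

Definition is_lattice_diagram (L : {set 'I_3} -> lattice)
    (f : forall p q : {set 'I_3}, p \subset q -> L p -> L q) : Prop :=
  [/\ (forall (p q : {set 'I_3}) (h : p \subset q), is_lattice_hom (f p q h)),
      (forall (p : {set 'I_3}) (h : p \subset p) x, f p p h x = x) &
      (forall p q r : {set 'I_3}, forall (hpq : p \subset q) (hqr : q \subset r) (hpr : p \subset r) x,
          f p r hpr x = f q r hqr (f p q hpq x))].

(* Con_c o L is naturally isomorphic to D_ac: for each p a
   {\/,0}-semilattice isomorphism phi_p : Con_c (L p) -> D_ac(p),
   natural w.r.t. the inclusion maps of D_ac. *)
Definition lifts_Dac (L : {set 'I_3} -> lattice)
    (f : forall p q : {set 'I_3}, p \subset q -> L p -> L q) : Prop :=
  exists phi : forall p, lrel (L p) -> {set 'I_8},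
  (forall p t, is_compact_congruence t -> Dac p (phi p t)) /\
      (forall p t1 t2, is_compact_congruence t1 -> is_compact_congruence t2 ->
          phi p t1 = phi p t2 -> forall x y, t1 x y <-> t2 x y) /\
      (forall p X, Dac p X ->
          exists t, is_compact_congruence t /\ phi p t = X) /\
      (forall p t1 t2, is_compact_congruence t1 -> is_compact_congruence t2 ->
          phi p (cong_join t1 t2) = phi p t1 :|: phi p t2) /\
      (forall p, phi p (@cong_zero (L p)) = set0) /\
      (forall (p q : {set 'I_3}) (h : p \subset q) t, is_compact_congruence t ->
          phi q (Conc_map (f p q h) t) = phi p t).

(* Main.v *)
Require Import Defs.
From mathcomp Require Import all_boot.
From Stdlib Require Import FunctionalExtensionality PropExtensionality.
Import Defs.
Set Implicit Arguments. Unset Strict Implicit. Unset Printing Implicit Defensive.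

Lemma meetxx (L : lattice) (x : L) : meet x x = x.
Proof. by rewrite -{2}(joinKm x x) meetKj. Qed.
Lemma joinxx (L : lattice) (x : L) : join x x = x.
Proof. by rewrite -{2}(meetKj x x) joinKm. Qed.
Lemma le_join (L : lattice) (x y : L) : meet x y = x -> join x y = y.
Proof. by move=> H; rewrite -{1}H joinC meetC joinKm. Qed.

Definition cg (L : lattice) (x y : L) : lrel L := cong_gen (fun u v => u = x /\ v = y).
Definition cc (L : lattice) (t : lrel L) := is_compact_congruence t.

Lemma cong_gen_cong (L : lattice) (R : lrel L) : is_congruence (cong_gen R).
Proof.
split.
- by move=> x t [h1 _ _ _] _.
- by move=> x y H t Ht HR; case: (Ht) => _ h2 _ _; apply: h2; exact: H t Ht HR.
- move=> x y z H1 H2 t Ht HR; case: (Ht) => _ _ h3 _.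
  by apply: h3 (H1 t Ht HR) (H2 t Ht HR).
- move=> x1 y1 x2 y2 H1 H2; split=> t Ht HR; case: (Ht) => _ _ _ h4;
  by have [] := h4 _ _ _ _ (H1 t Ht HR) (H2 t Ht HR).
Qed.

Lemma cong_gen_sub (L : lattice) (R : lrel L) : subrel R (cong_gen R).
Proof. by move=> x y h t _ HR; exact: HR. Qed.

Lemma cong_gen_min (L : lattice) (R t : lrel L) :
  is_congruence t -> subrel R t -> subrel (cong_gen R) t.
Proof. by move=> Ht HR x y H; exact: H t Ht HR. Qed.

Lemma releq (L : lattice) (a b : lrel L) : (forall x y, a x y <-> b x y) -> a = b.
Proof.
move=> H; apply: functional_extensionality => x; apply: functional_extensionality => y.
by apply: propositional_extensionality.
Qed.

Lemma crefl (L : lattice) (t : lrel L) x : is_congruence t -> t x x.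
Proof. by case=> h _ _ _; exact: h. Qed.
Lemma csym (L : lattice) (t : lrel L) x y : is_congruence t -> t x y -> t y x.
Proof. by case=> _ h _ _; exact: h. Qed.
Lemma ctrans (L : lattice) (t : lrel L) x y z : is_congruence t -> t x y -> t y z -> t x z.
Proof. by case=> _ _ h _; apply: h. Qed.
Lemma cmeet (L : lattice) (t : lrel L) x y z : is_congruence t -> t x y -> t (meet x z) (meet y z).
Proof. by case=> h1 _ _ h4 H; case: (h4 _ _ _ _ H (h1 z)). Qed.
Lemma cjoin (L : lattice) (t : lrel L) x y z : is_congruence t -> t x y -> t (join x z) (join y z).
Proof. by case=> h1 _ _ h4 H; case: (h4 _ _ _ _ H (h1 z)). Qed.

Lemma cg_xy (L : lattice) (x y : L) : cg x y x y.
Proof. exact: cong_gen_sub. Qed.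

Definition cgl (L : lattice) (I : Type) (b : I -> lrel L) (s : list I) : lrel L :=
  cong_gen (fun x y => exists i, List.In i s /\ b i x y).

Lemma cgl_mono (L : lattice) (I : Type) (b : I -> lrel L) (s s' : list I) :
  (forall i, List.In i s -> List.In i s') -> subrel (cgl b s) (cgl b s').
Proof.
move=> H; apply: cong_gen_min; first exact: cong_gen_cong.
by move=> x y [i [hi hb]]; apply: cong_gen_sub; exists i; split => //; apply: H.
Qed.

Lemma fin_gen (L : lattice) (I : Type) (b : I -> lrel L) x y :
  cong_gen (fun x y => exists i, b i x y) x y -> exists s, cgl b s x y.
Proof.
have mL : forall s1 s2, subrel (cgl b s1) (cgl b (s1 ++ s2)).
  by move=> s1 s2; apply: cgl_mono => i hi; apply: List.in_or_app; left.
have mR : forall s1 s2, subrel (cgl b s2) (cgl b (s1 ++ s2)).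
  by move=> s1 s2; apply: cgl_mono => i hi; apply: List.in_or_app; right.
apply: (@cong_gen_min L _ (fun x y => exists s, cgl b s x y)).
- split.
  + by move=> z; exists [::]; apply: crefl; exact: cong_gen_cong.
  + by move=> u v [s hs]; exists s; apply: csym (cong_gen_cong _) hs.
  + move=> u v w [s1 h1] [s2 h2]; exists (s1 ++ s2).
    exact: ctrans (cong_gen_cong _) (mL _ _ _ _ h1) (mR _ _ _ _ h2).
  + move=> x1 y1 x2 y2 [s1 h1] [s2 h2].
    have [e1 e2] := (match cong_gen_cong (fun x y => exists i, List.In i (s1 ++ s2) /\ b i x y) with
       And4 _ _ _ h4 => h4 _ _ _ _ (mL _ _ _ _ h1) (mR _ _ _ _ h2) end).
    by split; [exists (s1 ++ s2) | exists (s1 ++ s2)].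
- move=> u v [i hi]; exists [:: i]; apply: cong_gen_sub; exists i; split => //; by left.
Qed.

Lemma zero_compact (L : lattice) : cc (@cong_zero L).
Proof.
split.
- rewrite /cong_zero; split.
  + by [].
  + by move=> x y E; subst.
  + by move=> x y z E1 E2; subst.
  + by move=> x1 y1 x2 y2 E1 E2; subst.
- move=> I b Hb H; exists [::] => x y; rewrite /cong_zero => E; subst.
  by apply: crefl; exact: cong_gen_cong.
Qed.

Lemma cg_compact (L : lattice) (x y : L) : cc (cg x y).
Proof.
split; first exact: cong_gen_cong.
move=> I b Hb H; have [s Hs] := fin_gen (H x y (@cg_xy _ x y)).
exists s; apply: cong_gen_min; first exact: cong_gen_cong.
by move=> u v [-> ->].
Qed.

Lemma join_compact (L : lattice) (A B : lrel L) : cc A -> cc B -> cc (cong_join A B).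
Proof.
move=> [cA kA] [cB kB]; split; first exact: cong_gen_cong.
move=> I b Hb H.
have [sA hA] := kA I b Hb (fun x y h => H x y (cong_gen_sub (or_introl h))).
have [sB hB] := kB I b Hb (fun x y h => H x y (cong_gen_sub (or_intror h))).
exists (sA ++ sB); apply: cong_gen_min; first exact: cong_gen_cong.
move=> u v [h|h].
- apply: (@cgl_mono L I b sA); last exact: hA.
  by move=> i hi; apply: List.in_or_app; left.
- apply: (@cgl_mono L I b sB); last exact: hB.
  by move=> i hi; apply: List.in_or_app; right.
Qed.

Definition JH (K : lattice) (ph : lrel K -> {set 'I_8}) :=
  forall t1 t2, cc t1 -> cc t2 -> ph (cong_join t1 t2) = ph t1 :|: ph t2.
Definition IH (K : lattice) (ph : lrel K -> {set 'I_8}) :=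
  forall t1 t2, cc t1 -> cc t2 -> ph t1 = ph t2 -> forall x y, t1 x y <-> t2 x y.

Lemma join_sub (K : lattice) (t1 t2 t : lrel K) : is_congruence t -> subrel t1 t -> subrel t2 t ->
  subrel (cong_join t1 t2) t.
Proof. by move=> Ht h1 h2; apply: cong_gen_min => // u v [h|h]; [apply: h1 | apply: h2]. Qed.

Lemma ph_le (K : lattice) ph (Hj : @JH K ph) t1 t2 : cc t1 -> cc t2 -> subrel t1 t2 ->
  ph t1 \subset ph t2.
Proof.
move=> c1 c2 h.
have E : cong_join t1 t2 = t2.
  apply: releq => x y; split; last by move=> H; apply: cong_gen_sub; right.
  by apply: join_sub => //; case: c2.
by have := Hj _ _ c1 c2; rewrite E => ->; apply: subsetUl.
Qed.

Lemma ph_ge (K : lattice) ph (Hi : @IH K ph) (Hj : @JH K ph) t1 t2 : cc t1 -> cc t2 ->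
  ph t1 \subset ph t2 -> subrel t1 t2.
Proof.
move=> c1 c2 h x y H.
have E : ph (cong_join t1 t2) = ph t2 by rewrite Hj // (setUidPr h).
have [H1 _] := Hi _ _ (join_compact c1 c2) c2 E x y.
by apply: H1; apply: cong_gen_sub; left.
Qed.

Definition psi (K : lattice) (ph : lrel K -> {set 'I_8}) (x y : K) := ph (cg x y).

Lemma psi_sub (K : lattice) ph (Hj : @JH K ph) (x y u v : K) :
  cg x y u v -> psi ph u v \subset psi ph x y.
Proof.
move=> H; apply: ph_le => //; try exact: cg_compact.
by apply: cong_gen_min; [exact: cong_gen_cong | move=> a b [-> ->]].
Qed.

Lemma psi_sub2 (K : lattice) ph (Hj : @JH K ph) (x y x' y' u v : K) :
  cong_join (cg x y) (cg x' y') u v -> psi ph u v \subset psi ph x y :|: psi ph x' y'.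
Proof.
move=> H; rewrite -Hj; try exact: cg_compact.
apply: ph_le => //; try exact: cg_compact; first by apply: join_compact; exact: cg_compact.
by apply: cong_gen_min; [exact: cong_gen_cong | move=> a b [-> ->]].
Qed.

Lemma psi_subA (K : lattice) ph (Hj : @JH K ph) (A : lrel K) (u v : K) :
  cc A -> A u v -> psi ph u v \subset ph A.
Proof.
move=> cA H; apply: ph_le => //; first exact: cg_compact.
by apply: cong_gen_min; [case: cA | move=> a b [-> ->]].
Qed.

Lemma psi_zero (K : lattice) ph (Hi : @IH K ph) (H0 : ph (@cong_zero K) = set0) (x y : K) :
  psi ph x y = set0 -> x = y.
Proof.
move=> E; rewrite -H0 in E.
have [h _] := Hi _ _ (cg_compact x y) (@zero_compact K) E x y.
exact: h (@cg_xy _ x y).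
Qed.

Lemma conc_cg (K L : lattice) (g : K -> L) (hg : is_lattice_hom g) (x y : K) :
  Conc_map g (cg x y) = cg (g x) (g y).
Proof.
apply: releq => u v; split.
- apply: cong_gen_min; first exact: cong_gen_cong.
  move=> u' v' [x' [y' [H [-> ->]]]].
  pose t' := fun a b => cg (g x) (g y) (g a) (g b).
  have ct : is_congruence t'.
    split.
    + by move=> a; rewrite /t'; apply: crefl; exact: cong_gen_cong.
    + by move=> a b; rewrite /t'; apply: csym; exact: cong_gen_cong.
    + by move=> a b c; rewrite /t'; apply: ctrans; exact: cong_gen_cong.
    + move=> x1 y1 x2 y2 h1 h2; rewrite /t' !(proj1 (hg _ _)) !(proj2 (hg _ _)).
      by case: (cong_gen_cong (fun u v => u = g x /\ v = g y)) => _ _ _ h4; apply: h4.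
  have : t' x' y'.
    by apply: (cong_gen_min ct _ H) => a b [-> ->]; exact: cg_xy.
  done.
- apply: cong_gen_min; first exact: cong_gen_cong.
  by move=> a b [-> ->]; apply: cong_gen_sub; exists x, y; split => //; exact: cg_xy.
Qed.

Lemma cg_meetE (K : lattice) (x y z x' y' : K) :
  meet x z = x' -> meet y z = y' -> cg x y x' y'.
Proof. by move=> <- <-; apply: (@cmeet _ (cg x y) x y z); [exact: cong_gen_cong | exact: cg_xy]. Qed.
Lemma cg_joinE (K : lattice) (x y z x' y' : K) :
  join x z = x' -> join y z = y' -> cg x y x' y'.
Proof. by move=> <- <-; apply: (@cjoin _ (cg x y) x y z); [exact: cong_gen_cong | exact: cg_xy]. Qed.
Lemma cg_symE (K : lattice) (x y : K) : cg x y y x.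
Proof. by apply: (@csym _ (cg x y) x y); [exact: cong_gen_cong | exact: cg_xy]. Qed.

Lemma cj_l (K : lattice) (t1 t2 : lrel K) x y : t1 x y -> cong_join t1 t2 x y.
Proof. by move=> h; apply: cong_gen_sub; left. Qed.
Lemma cj_r (K : lattice) (t1 t2 : lrel K) x y : t2 x y -> cong_join t1 t2 x y.
Proof. by move=> h; apply: cong_gen_sub; right. Qed.

Lemma cj_trans (K : lattice) (u v w : K) : cong_join (cg u v) (cg v w) u w.
Proof.
apply: (@ctrans _ (cong_join (cg u v) (cg v w)) u v w); first exact: cong_gen_cong.
- by apply: cj_l; exact: cg_xy.
- by apply: cj_r; exact: cg_xy.
Qed.

Lemma setEsub (A B C : {set 'I_8}) : A \subset C -> B \subset C -> C \subset A :|: B -> A :|: B = C.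
Proof. by move=> h1 h2 h3; apply/eqP; rewrite eqEsubset subUset h1 h2 h3. Qed.

Lemma triK (K : lattice) ph (Hj : @JH K ph) (a zi zk : K) :
  meet a zi = a -> meet a zk = a ->
  psi ph a (meet zi zk) :|: psi ph (meet zi zk) zi = psi ph a zi.
Proof.
move=> h1 h2; set m := meet zi zk.
have am : meet a m = a by rewrite /m meetA h1 h2.
apply: setEsub.
- apply: psi_sub => //; apply: (@cg_meetE _ _ _ m) => //.
  by rewrite /m meetA meetxx.
- apply: psi_sub => //; apply: (@cg_joinE _ _ _ m); first exact: le_join.
  by rewrite /m joinKm.
- by apply: psi_sub2 => //; exact: cj_trans.
Qed.

Lemma lemY (K : lattice) ph (Hj : @JH K ph) (b zi zk : K) :
  meet zi b = zi -> psi ph (meet zi zk) zi \subset psi ph zk b.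
Proof.
move=> h; apply: psi_sub => //; apply: (@cg_meetE _ _ _ zi); first exact: meetC.
by rewrite meetC.
Qed.

Lemma lemW (K : lattice) ph (Hj : @JH K ph) (zi zk : K) :
  psi ph zi zk = psi ph (meet zi zk) zi :|: psi ph (meet zi zk) zk.
Proof.
apply/esym; apply: setEsub.
- apply: psi_sub => //; apply: (@csym _ (cg zi zk) zi (meet zi zk)); first exact: cong_gen_cong.
  apply: (@cg_meetE _ _ _ zi); first exact: meetxx.
  exact: meetC.
- apply: psi_sub => //; apply: (@cg_meetE _ _ _ zk) => //; exact: meetxx.
- apply: psi_sub2 => //; apply: (@ctrans _ (cong_join (cg (meet zi zk) zi) (cg (meet zi zk) zk)) zi (meet zi zk) zk); first exact: cong_gen_cong.
  + by apply: cj_l; exact: cg_symE.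
  + by apply: cj_r; exact: cg_xy.
Qed.

Lemma normK (K : lattice) (A B : lrel K) (a b z0 : K) :
  is_congruence A -> is_congruence B -> meet a b = a -> A a z0 -> B z0 b ->
  let z := meet (join z0 a) b in [/\ A a z, B z b, meet a z = a & meet z b = z].
Proof.
move=> cA cB hab h1 h2 z; split.
- have := @cmeet _ A _ _ b cA (@cjoin _ A _ _ a cA h1).
  by rewrite joinxx hab.
- have := @cmeet _ B _ _ b cB (@cjoin _ B _ _ a cB h2).
  by rewrite (meetC (join b a)) meetKj.
- by rewrite /z meetA (joinC z0) meetKj hab.
- by rewrite /z -meetA meetxx.
Qed.

Lemma singleK (K : lattice) ph (Hi : @IH K ph) (Hj : @JH K ph) (AP : almost_permutable K)
  (A B : lrel K) (a b : K) : cc A -> cc B -> ph A :|: ph B = setT -> meet a b = a ->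
  exists z, [/\ meet a z = a, meet z b = z,
     (psi ph a z \subset ph A /\ psi ph z b \subset ph B) \/
     (psi ph a z \subset ph B /\ psi ph z b \subset ph A) &
     psi ph a b \subset psi ph a z :|: psi ph z b].
Proof.
move=> cA cB hT hab.
have hJ : cong_join A B a b.
  apply: (@ph_ge K ph Hi Hj (cg a b)) => //; first exact: cg_compact.
  - exact: join_compact.
  - by rewrite Hj // hT subsetT.
  - exact: cg_xy.
have cA' := proj1 cA; have cB' := proj1 cB.
have [/(_ hJ) [[z0 [h1 h2]] | [z0 [h1 h2]]] _] := AP A B cA' cB' a b.
- have [e1 e2 e3 e4] := normK cA' cB' hab h1 h2.
  exists (meet (join z0 a) b); split => //.
  + by left; split; apply: psi_subA.
  + by apply: psi_sub2 => //; exact: cj_trans.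
- have [e1 e2 e3 e4] := normK cB' cA' hab h1 h2.
  exists (meet (join z0 a) b); split => //.
  + by right; split; apply: psi_subA.
  + by apply: psi_sub2 => //; exact: cj_trans.
Qed.

Lemma hom_le (K L : lattice) (g : K -> L) (hg : is_lattice_hom g) (x y : K) :
  meet x y = x -> meet (g x) (g y) = g x.
Proof. by move=> h; rewrite -(proj1 (hg x y)) h. Qed.

Lemma cg_mj (K : lattice) (x y : K) : cg (meet x y) (join x y) x y.
Proof.
apply: (@ctrans _ (cg (meet x y) (join x y)) x (meet x y) y); first exact: cong_gen_cong.
- apply: (@csym _ (cg (meet x y) (join x y)) (meet x y) x); first exact: cong_gen_cong.
  apply: (@cg_meetE _ _ _ x).
  + by rewrite meetC meetA meetxx.
  + by rewrite meetC meetKj.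
- apply: (@cg_meetE _ _ _ y).
  + by rewrite -meetA meetxx.
  + by rewrite joinC meetC meetKj.
Qed.

Lemma meet_mj (K : lattice) (x y : K) : meet (meet x y) (join x y) = meet x y.
Proof. by rewrite -meetA (joinC x) meetKj. Qed.

Definition vb (X : {set 'I_8}) : seq bool := [seq (inord k : 'I_8) \in X | k <- iota 0 8].
Definition bor (u w : seq bool) := [seq p.1 || p.2 | p <- zip u w].
Definition bsub (u w : seq bool) := all (fun p => p.1 ==> p.2) (zip u w).
Definition v0 := nseq 8 false.
Definition vT := nseq 8 true.

Lemma bor_map (T : Type) (f g : T -> bool) s :
  bor (map f s) (map g s) = map (fun x => f x || g x) s.
Proof. by elim: s => //= x s IH; rewrite /bor /= -IH. Qed.

Lemma bsub_map (T : Type) (f g : T -> bool) s :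
  (forall x, f x -> g x) -> bsub (map f s) (map g s).
Proof. move=> H; elim: s => //= x s IH; rewrite /bsub /=; apply/andP; split => //.
by apply/implyP => /H. Qed.

Lemma vbU (A B : {set 'I_8}) : vb (A :|: B) = bor (vb A) (vb B).
Proof. by rewrite /vb bor_map; apply: eq_map => k; rewrite inE. Qed.

Lemma vbS (A B : {set 'I_8}) : A \subset B -> bsub (vb A) (vb B).
Proof. by move=> /subsetP H; apply: bsub_map => k /H. Qed.

Lemma vbT : vb setT = vT.
Proof. by rewrite /vb; under eq_map do rewrite inE. Qed.

Lemma vb0 : vb set0 = v0.
Proof. by rewrite /vb; under eq_map do rewrite inE. Qed.

Lemma vb_s8 l : vb (s8 l) = [seq k \in l | k <- iota 0 8].
Proof.
rewrite /vb; apply/eq_in_map => k; rewrite mem_iota /= => hk.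
have e : val (inord k : 'I_8) = k by exact: inordK.
by rewrite inE e.
Qed.

Lemma vb_nth (A : {set 'I_8}) k : k < 8 -> nth false (vb A) k = ((inord k : 'I_8) \in A).
Proof. move=> hk; by rewrite /vb (nth_map 0) ?size_iota // nth_iota. Qed.

Lemma vb_inj (A B : {set 'I_8}) : vb A = vb B -> A = B.
Proof.
move=> E; apply/setP => i; rewrite -(inord_val i) -!vb_nth //; by rewrite E.
Qed.

Fixpoint subs (G : seq (seq bool)) : seq (seq bool) :=
  if G is g :: G' then subs G' ++ [seq bor g u | u <- subs G'] else [:: v0].

Lemma v0_subs G : v0 \in subs G.
Proof. by elim: G => [|g G IH] //=; rewrite mem_cat IH. Qed.

Lemma mask_subs G m : foldr bor v0 (mask m G) \in subs G.
Proof.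
elim: G m => [|g G IH] [|b m] //=; rewrite ?mem_cat ?v0_subs //.
case: b => /=; last by rewrite IH.
by rewrite map_f ?orbT.
Qed.

Lemma vb_big (s : seq {set 'I_8}) : vb (\bigcup_(Y <- s) Y) = foldr bor v0 (map vb s).
Proof. elim: s => [|Y s IH]; first by rewrite big_nil vb0. by rewrite big_cons vbU IH. Qed.

Lemma Dac_vb p X : Dac p X -> vb X \in subs (map vb (Dac_gens p)).
Proof. by case=> m ->; rewrite vb_big map_mask mask_subs. Qed.

Lemma i3E k : k < 3 -> val (i3 k) = k.
Proof. move=> h; exact: inordK. Qed.

Lemma gens0 : Dac_gens set0 = [:: setT].
Proof. by rewrite /Dac_gens eqxx. Qed.

Ltac neqset x := apply/negbTE/eqP => /setP /(_ x); rewrite !inE /eq_op /= ?i3E.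

Lemma gensS0 : Dac_gens [set i3 0] = [:: alpha0; beta0].
Proof. rewrite /Dac_gens. rewrite (_ : _ == set0 = false) ?eqxx //. neqset (i3 0) => //. Qed.
Lemma neqL (p q : {set 'I_3}) i : (i \in p) != (i \in q) -> (p == q) = false.
Proof. by move=> h; apply/negbTE/eqP => E; move: h; rewrite E eqxx. Qed.
Lemma i3eq a b : a < 3 -> b < 3 -> (i3 a == i3 b) = (a == b).
Proof. by move=> ha hb; rewrite -val_eqE !i3E. Qed.
Ltac neq := first [apply: (@neqL _ _ (i3 0)); by rewrite !inE ?i3eq
  | apply: (@neqL _ _ (i3 1)); by rewrite !inE ?i3eq
  | apply: (@neqL _ _ (i3 2)); by rewrite !inE ?i3eq].
Ltac gens := rewrite /Dac_gens; repeat (first [rewrite eqxx /= | rewrite (_ : (_ == _) = false) /=; last by neq]).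
Lemma gensS1 : Dac_gens [set i3 1] = [:: alpha1; beta1].
Proof. by gens. Qed.
Lemma gensS2 : Dac_gens [set i3 2] = [:: alpha2; beta2].
Proof. by gens. Qed.
Lemma gensT0 : Dac_gens [set i3 1; i3 2] = [:: xi0; xi1; xi2; xi3].
Proof. by gens. Qed.
Lemma gensT1 : Dac_gens [set i3 0; i3 2] = [:: eta0; eta1; eta2; eta3].
Proof. by gens. Qed.
Lemma gensT2 : Dac_gens [set i3 0; i3 1] = [:: zeta0; zeta1; zeta2; zeta3].
Proof. by gens. Qed.
Definition bv (l : seq nat) := [seq k \in l | k <- iota 0 8].
Definition all3 (T : seq (seq bool)) (P : seq bool -> seq bool -> seq bool -> bool) :=
  all (fun X => all (fun Y => all (fun Z => P X Y Z) T) T) T.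
Definition cnd (al be c d : seq bool) :=
  ((bsub c al && bsub d be) || (bsub c be && bsub d al)) && (bor c d == vT).
Definition pc (ci ck di dk X Y Z : seq bool) :=
  [&& bor X Y == ci, bor X Z == ck, bsub Y dk & bsub Z di].
Definition vA0 := bv [:: 0; 1; 4; 5; 6; 7]. Definition vB0 := bv [:: 2; 3; 4; 5; 6; 7].
Definition vA1 := bv [:: 0; 3; 4; 5; 6; 7]. Definition vB1 := bv [:: 1; 2; 4; 5; 6; 7].
Definition vA2 := bv [:: 0; 2; 4; 5; 6; 7]. Definition vB2 := bv [:: 1; 3; 4; 5; 6; 7].
Definition VS0 := subs [:: vA0; vB0]. Definition VS1 := subs [:: vA1; vB1]. Definition VS2 := subs [:: vA2; vB2].
Definition VT0 := subs [:: bv [:: 0; 4; 7]; bv [:: 3; 5; 6]; bv [:: 2; 5; 6]; bv [:: 1; 4; 7]].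
Definition VT1 := subs [:: bv [:: 0; 4; 5; 7]; bv [:: 1; 4; 6; 7]; bv [:: 2; 5; 6; 7]; bv [:: 3; 4; 5; 6]].
Definition VT2 := subs [:: bv [:: 0; 4; 6]; bv [:: 1; 5; 7]; bv [:: 3; 5; 7]; bv [:: 2; 4; 6]].

Definition lvl3 c0 c1 c2 d0 d1 d2 :=
 all3 VT2 (fun X Y Z => if pc c0 c1 d0 d1 X Y Z then
 all3 VT1 (fun X' Y' Z' => if pc c0 c2 d0 d2 X' Y' Z' then
 all3 VT0 (fun X'' Y'' Z'' => if pc c1 c2 d1 d2 X'' Y'' Z'' then
 ~~ bsub (bor Y' Z') (bor (bor Y Z) (bor Y'' Z'')) else true)
 else true) else true).
Definition check :=
 all (fun c0 => all (fun d0 => if cnd vA0 vB0 c0 d0 then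
 all (fun c1 => all (fun d1 => if cnd vA1 vB1 c1 d1 then
 all (fun c2 => all (fun d2 => if cnd vA2 vB2 c2 d2 then lvl3 c0 c1 c2 d0 d1 d2 else true)
 VS2) VS2 else true) VS1) VS1 else true) VS0) VS0.

Lemma checkT : check.
Proof. vm_compute. reflexivity. Qed.

Lemma all3P (T : seq (seq bool)) P X Y Z : all3 T P -> X \in T -> Y \in T -> Z \in T -> P X Y Z.
Proof. by move=> /allP H hX hY hZ; move: (H X hX) => /allP /(_ Y hY) /allP /(_ Z hZ). Qed.

Lemma check_use c0 d0 c1 d1 c2 d2 X Y Z X' Y' Z' X'' Y'' Z'' :
 c0 \in VS0 -> d0 \in VS0 -> c1 \in VS1 -> d1 \in VS1 -> c2 \in VS2 -> d2 \in VS2 ->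
 cnd vA0 vB0 c0 d0 -> cnd vA1 vB1 c1 d1 -> cnd vA2 vB2 c2 d2 ->
 X \in VT2 -> Y \in VT2 -> Z \in VT2 -> pc c0 c1 d0 d1 X Y Z ->
 X' \in VT1 -> Y' \in VT1 -> Z' \in VT1 -> pc c0 c2 d0 d2 X' Y' Z' ->
 X'' \in VT0 -> Y'' \in VT0 -> Z'' \in VT0 -> pc c1 c2 d1 d2 X'' Y'' Z'' ->
 bsub (bor Y' Z') (bor (bor Y Z) (bor Y'' Z'')) -> False.
Proof.
move=> hc0 hd0 hc1 hd1 hc2 hd2 k0 k1 k2 hX hY hZ p1 hX' hY' hZ' p2 hX'' hY'' hZ'' p3 hb.
have := checkT; move/allP/(_ c0 hc0)/allP/(_ d0 hd0); rewrite k0.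
move/allP/(_ c1 hc1)/allP/(_ d1 hd1); rewrite k1.
move/allP/(_ c2 hc2)/allP/(_ d2 hd2); rewrite k2.
rewrite /lvl3 => H; move: (all3P H hX hY hZ) => /=; rewrite p1 => {}H.
move: (all3P H hX' hY' hZ') => /=; rewrite p2 => {}H.
move: (all3P H hX'' hY'' hZ'') => /=; rewrite p3.
by rewrite hb.
Qed.

Lemma DacS0 X : Dac [set i3 0] X -> vb X \in VS0.
Proof. by move/Dac_vb; rewrite gensS0 /= /alpha0 /beta0 !vb_s8. Qed.
Lemma DacS1 X : Dac [set i3 1] X -> vb X \in VS1.
Proof. by move/Dac_vb; rewrite gensS1 /= /alpha1 /beta1 !vb_s8. Qed.
Lemma DacS2 X : Dac [set i3 2] X -> vb X \in VS2.
Proof. by move/Dac_vb; rewrite gensS2 /= /alpha2 /beta2 !vb_s8. Qed.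
Lemma DacT0 X : Dac [set i3 1; i3 2] X -> vb X \in VT0.
Proof. by move/Dac_vb; rewrite gensT0 /= /xi0 /xi1 /xi2 /xi3 !vb_s8. Qed.
Lemma DacT1 X : Dac [set i3 0; i3 2] X -> vb X \in VT1.
Proof. by move/Dac_vb; rewrite gensT1 /= /eta0 /eta1 /eta2 /eta3 !vb_s8. Qed.
Lemma DacT2 X : Dac [set i3 0; i3 1] X -> vb X \in VT2.
Proof. by move/Dac_vb; rewrite gensT2 /= /zeta0 /zeta1 /zeta2 /zeta3 !vb_s8. Qed.
Lemma Dac0 X : Dac set0 X -> X = set0 \/ X = setT.
Proof.
move/Dac_vb; rewrite gens0 /= vbT !inE => /orP [/eqP E|/eqP E].
- by left; apply: vb_inj; rewrite E vb0.
- by right; apply: vb_inj; rewrite E vbT.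
Qed.

Lemma Dac_gen2 p (a b : {set 'I_8}) : Dac_gens p = [:: a; b] -> Dac p a /\ Dac p b.
Proof.
move=> E; split.
- by exists [:: true; false]; rewrite E /= big_cons big_nil setU0.
- by exists [:: false; true]; rewrite E /= big_cons big_nil setU0.
Qed.
Lemma DacT_0 : Dac set0 setT.
Proof. by exists [:: true]; rewrite gens0 /= big_cons big_nil setU0. Qed.

Lemma ab0 : alpha0 :|: beta0 = setT.
Proof. by apply: vb_inj; rewrite vbU vbT /alpha0 /beta0 !vb_s8. Qed.
Lemma ab1 : alpha1 :|: beta1 = setT.
Proof. by apply: vb_inj; rewrite vbU vbT /alpha1 /beta1 !vb_s8. Qed.
Lemma ab2 : alpha2 :|: beta2 = setT.
Proof. by apply: vb_inj; rewrite vbU vbT /alpha2 /beta2 !vb_s8. Qed.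

Lemma cnd_of (al be c d : {set 'I_8}) :
  (c \subset al /\ d \subset be) \/ (c \subset be /\ d \subset al) -> c :|: d = setT ->
  cnd (vb al) (vb be) (vb c) (vb d).
Proof.
move=> H E; rewrite /cnd -vbU E vbT eqxx andbT.
by case: H => [[h1 h2]|[h1 h2]]; rewrite (vbS h1) (vbS h2) ?orbT.
Qed.

Lemma pc_of (ci ck di dk X Y Z : {set 'I_8}) :
  X :|: Y = ci -> X :|: Z = ck -> Y \subset dk -> Z \subset di ->
  pc (vb ci) (vb ck) (vb di) (vb dk) (vb X) (vb Y) (vb Z).
Proof. by move=> <- <- h1 h2; rewrite /pc -!vbU !eqxx !vbS. Qed.

Lemma vA0E : vb alpha0 = vA0. Proof. exact: vb_s8. Qed.
Lemma vB0E : vb beta0 = vB0. Proof. exact: vb_s8. Qed.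
Lemma vA1E : vb alpha1 = vA1. Proof. exact: vb_s8. Qed.
Lemma vB1E : vb beta1 = vB1. Proof. exact: vb_s8. Qed.
Lemma vA2E : vb alpha2 = vA2. Proof. exact: vb_s8. Qed.
Lemma vB2E : vb beta2 = vB2. Proof. exact: vb_s8. Qed.

Theorem theorem7p1 :
  ~ exists (L : {set 'I_3} -> lattice)
           (f : forall p q : {set 'I_3}, p \subset q -> L p -> L q),
      [/\ @is_lattice_diagram L f,
          @lifts_Dac L f &
          (forall i : 'I_3, almost_permutable (L [set i]))].
Proof.
case=> L [f [[Hhom Hid Hcomp] [phi [H1 [H2 [H3 [H4 [H5 H6]]]]]] AP]].
have Hd : forall p (x y : L p), Dac p (psi (phi p) x y).
  by move=> p x y; apply: H1; exact: cg_compact.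
have Hn : forall (p q : {set 'I_3}) (h : p \subset q) (x y : L p),
    psi (phi q) (f p q h x) (f p q h y) = psi (phi p) x y.
  move=> p q h x y; rewrite /psi -(conc_cg (Hhom p q h)) H6 //; exact: cg_compact.
have main : forall a b : L set0, meet a b = a -> psi (phi set0) a b = setT -> False.
  move=> a b hab hT.
  have single : forall (i : 'I_3) (al be : {set 'I_8}),
      Dac [set i] al -> Dac [set i] be -> al :|: be = setT ->
      exists z : L [set i],
       [/\ meet (f _ _ (sub0set [set i]) a) z = f _ _ (sub0set [set i]) a,
           meet z (f _ _ (sub0set [set i]) b) = z,
           (psi (phi _) (f _ _ (sub0set [set i]) a) z \subset al /\
            psi (phi _) z (f _ _ (sub0set [set i]) b) \subset be) \/
           (psi (phi _) (f _ _ (sub0set [set i]) a) z \subset be /\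
            psi (phi _) z (f _ _ (sub0set [set i]) b) \subset al) &
           psi (phi _) (f _ _ (sub0set [set i]) a) z :|:
             psi (phi _) z (f _ _ (sub0set [set i]) b) = setT].
    move=> i al be hal hbe hU.
    have [A [cA eA]] := H3 _ _ hal.
    have [B [cB eB]] := H3 _ _ hbe.
    have hab' := hom_le (Hhom _ _ (sub0set [set i])) hab.
    have [z [e1 e2 e3 e4]] := singleK (H2 _) (H4 _) (AP i) cA cB (ltac:(by rewrite eA eB)) hab'.
    exists z; split => //; first by rewrite -eA -eB.
    apply/eqP; rewrite eqEsubset subsetT /= -hT -(Hn _ _ (sub0set [set i]) a b).
    exact: e4.
  have pair : forall (pi pk q : {set 'I_3}) (hi : pi \subset q) (hk : pk \subset q)
      (zi : L pi) (zk : L pk),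
      meet (f _ _ (sub0set pi) a) zi = f _ _ (sub0set pi) a ->
      meet zi (f _ _ (sub0set pi) b) = zi ->
      meet (f _ _ (sub0set pk) a) zk = f _ _ (sub0set pk) a ->
      meet zk (f _ _ (sub0set pk) b) = zk ->
      exists X Y Z, [/\ Dac q X /\ Dac q Y /\ Dac q Z,
        (X :|: Y = psi (phi pi) (f _ _ (sub0set pi) a) zi /\
        X :|: Z = psi (phi pk) (f _ _ (sub0set pk) a) zk),
        (Y \subset psi (phi pk) zk (f _ _ (sub0set pk) b) /\
        Z \subset psi (phi pi) zi (f _ _ (sub0set pi) b)) &
        psi (phi setT) (f _ _ (subsetT pi) zi) (f _ _ (subsetT pk) zk) = Y :|: Z].
    move=> pi pk q hi hk zi zk ai bi ak bk.
    have eAi := esym (Hcomp _ _ _ (sub0set pi) hi (sub0set q) a).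
    have eAk := esym (Hcomp _ _ _ (sub0set pk) hk (sub0set q) a).
    have eBi := esym (Hcomp _ _ _ (sub0set pi) hi (sub0set q) b).
    have eBk := esym (Hcomp _ _ _ (sub0set pk) hk (sub0set q) b).
    have li : meet (f _ _ (sub0set q) a) (f _ _ hi zi) = f _ _ (sub0set q) a.
      by rewrite -eAi; exact: (@hom_le _ _ _ (Hhom _ _ hi) _ _ ai).
    have lk : meet (f _ _ (sub0set q) a) (f _ _ hk zk) = f _ _ (sub0set q) a.
      by rewrite -eAk; exact: (@hom_le _ _ _ (Hhom _ _ hk) _ _ ak).
    have ri : meet (f _ _ hi zi) (f _ _ (sub0set q) b) = f _ _ hi zi.
      by rewrite -eBi; exact: (@hom_le _ _ _ (Hhom _ _ hi) _ _ bi).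
    have rk : meet (f _ _ hk zk) (f _ _ (sub0set q) b) = f _ _ hk zk.
      by rewrite -eBk; exact: (@hom_le _ _ _ (Hhom _ _ hk) _ _ bk).
    exists (psi (phi q) (f _ _ (sub0set q) a) (meet (f _ _ hi zi) (f _ _ hk zk))),
      (psi (phi q) (meet (f _ _ hi zi) (f _ _ hk zk)) (f _ _ hi zi)),
      (psi (phi q) (meet (f _ _ hi zi) (f _ _ hk zk)) (f _ _ hk zk)).
    split; first by split; [|split]; exact: Hd.
    - split.
      + by rewrite (triK (H4 q)) // -eAi Hn.
      + by rewrite (meetC (f _ _ hi zi)) (triK (H4 q)) // -eAk Hn.
    - split.
      + by apply: subset_trans (@lemY _ _ (H4 q) _ _ (f _ _ hk zk) ri) _; rewrite -eBk Hn.
      + rewrite (meetC (f _ _ hi zi)).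
        by apply: subset_trans (@lemY _ _ (H4 q) _ _ (f _ _ hi zi) rk) _; rewrite -eBi Hn.
    - rewrite (Hcomp _ _ _ hi (subsetT q) (subsetT pi) zi).
      rewrite (Hcomp _ _ _ hk (subsetT q) (subsetT pk) zk) Hn.
      exact: (@lemW _ (phi q) (H4 q)).
  have h00 : [set i3 0] \subset [set i3 0; i3 1] by rewrite sub1set !inE eqxx.
  have h10 : [set i3 1] \subset [set i3 0; i3 1] by rewrite sub1set !inE eqxx orbT.
  have h01 : [set i3 0] \subset [set i3 0; i3 2] by rewrite sub1set !inE eqxx.
  have h21 : [set i3 2] \subset [set i3 0; i3 2] by rewrite sub1set !inE eqxx orbT.
  have h12 : [set i3 1] \subset [set i3 1; i3 2] by rewrite sub1set !inE eqxx.
  have h22 : [set i3 2] \subset [set i3 1; i3 2] by rewrite sub1set !inE eqxx orbT.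
  have [gA0 gB0] := Dac_gen2 gensS0.
  have [gA1 gB1] := Dac_gen2 gensS1.
  have [gA2 gB2] := Dac_gen2 gensS2.
  have [z0 [a0 b0 o0 u0]] := single (i3 0) alpha0 beta0 gA0 gB0 ab0.
  have [z1 [a1 b1 o1 u1]] := single (i3 1) alpha1 beta1 gA1 gB1 ab1.
  have [z2 [a2 b2 o2 u2]] := single (i3 2) alpha2 beta2 gA2 gB2 ab2.
  have [X [Y [Z [[dX [dY dZ]] [e1 e2] [s1 s2] w01]]]] := pair _ _ _ h00 h10 z0 z1 a0 b0 a1 b1.
  have [X' [Y' [Z' [[dX' [dY' dZ']] [e1' e2'] [s1' s2'] w02]]]] := pair _ _ _ h01 h21 z0 z2 a0 b0 a2 b2.
  have [X'' [Y'' [Z'' [[dX'' [dY'' dZ'']] [e1'' e2''] [s1'' s2''] w12]]]] := pair _ _ _ h12 h22 z1 z2 a1 b1 a2 b2.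
  have tri := psi_sub2 (H4 setT) (@cj_trans _ (f _ _ (subsetT [set i3 0]) z0)
     (f _ _ (subsetT [set i3 1]) z1) (f _ _ (subsetT [set i3 2]) z2)).
  rewrite w01 w02 w12 in tri.
  apply: (check_use _ _ _ _ _ _ _ _ _ (DacT2 dX) (DacT2 dY) (DacT2 dZ) (pc_of e1 e2 s1 s2)
    (DacT1 dX') (DacT1 dY') (DacT1 dZ') (pc_of e1' e2' s1' s2')
    (DacT0 dX'') (DacT0 dY'') (DacT0 dZ'') (pc_of e1'' e2'' s1'' s2'') _).
  - exact: DacS0 (Hd _ _ _).
  - exact: DacS0 (Hd _ _ _).
  - exact: DacS1 (Hd _ _ _).
  - exact: DacS1 (Hd _ _ _).
  - exact: DacS2 (Hd _ _ _).
  - exact: DacS2 (Hd _ _ _).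
  - by rewrite -vA0E -vB0E; exact: cnd_of o0 u0.
  - by rewrite -vA1E -vB1E; exact: cnd_of o1 u1.
  - by rewrite -vA2E -vB2E; exact: cnd_of o2 u2.
  - by rewrite -!vbU; exact: vbS tri.
have [t [ct et]] := H3 set0 setT DacT_0.
have tz : forall x y, t x y -> x = y.
  move=> x y hxy.
  case: (Dac0 (Hd _ x y)) => E; first exact: (psi_zero (H2 set0) (H5 set0) E).
  exfalso; apply: (main (meet x y) (join x y) (@meet_mj _ x y)).
  apply/eqP; rewrite eqEsubset subsetT -E /=. exact: (psi_sub (H4 set0) (@cg_mj _ x y)).
have Et : t = @cong_zero (L set0).
  apply: releq => x y; split; first exact: tz.
  by rewrite /cong_zero => E; subst y; apply: crefl (proj1 ct).
by move: et; rewrite Et H5 => /setP /(_ ord0); rewrite !inE.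
Qed.
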